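(* Let $p\geq 3$ be a prime and $k$ a positive integer, and suppose that the sequence $\big(\nu_{p}(A_{p,k}(n))\big)_{n\in\mathbb{N}}$ is eventually constant and equal to $1$. Then: (a) if $p-1\mid k$, then $p\nmid k$; (b) if $p-1\nmid k$, $k=(p-1)k'+q$ for some integer $k'$ and some $q\in\{1,\ldots,p-2\}$, and $p\mid k'+1$, then $p^{2}\nmid k'+1$.
   Context: For an integer $m\geq 2$ and a positive integer $k$, the integers $A_{m,k}(n)$, $n\in\mathbb{N}=\{0,1,2,\ldots\}$, are defined by the formal power series identity $\prod_{i=0}^{\infty}\big(1-x^{m^{i}}\big)^{-k}=\sum_{n=0}^{\infty}A_{m,k}(n)x^{n}$. For a prime $p$, $\nu_p(n)$ denotes the $p$-adic valuation of the integer $n$, with $\nu_p(0)=+\infty$. *)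

(* Defs.v *)
From mathcomp Require Import all_boot all_order all_algebra.
Set Implicit Arguments. Unset Strict Implicit. Unset Printing Implicit Defensive.
Import GRing.Theory Num.Theory.
Local Open Scope ring_scope.

(* Truncation to degree N (coefficients of x^0..x^N) of the power series
   (1 - x^d)^{-k} = \sum_{j>=0} C(j+k-1, j) x^{j d}. *)
Definition inv_factor_trunc (N d k : nat) : {poly int} :=
  \sum_(j < N.+1) ('C(j + k - 1, j))%:R *: 'X^(j * d).

(* A_{m,k}(n) : coefficient of x^n in prod_{i>=0} (1 - x^{m^i})^{-k}.
   For m >= 2 and i >= n+1 we have m^i > n, so only the factors i <= n
   and only the terms of degree <= n matter for the coefficient of x^n. *)
Definition A (m k n : nat) : int :=
  (\prod_(i < n.+1) inv_factor_trunc n (m ^ i) k)`_n.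

Definition nu (p : nat) (a : int) : nat := logn p `|a|%N.

(* Main.v *)
Require Import Defs.
From mathcomp Require Import all_boot all_order all_algebra.
From mathcomp Require Import ring zify.
Import GRing.Theory Num.Theory.
Local Open Scope ring_scope.
Set Implicit Arguments. Unset Strict Implicit. Unset Printing Implicit Defensive.

Definition Iz (m M : nat) (z : {poly int}) :=
  exists c d : {poly int}, z = m%:R * c + 'X^M * d.
Definition Cz m M (a b : {poly int}) := Iz m M (a - b).
Definition Dz (m : nat) (z : {poly int}) := exists c : {poly int}, z = m%:R * c.

Lemma I0 m M : Iz m M 0.
Proof. by exists 0, 0; rewrite !mulr0 addr0. Qed.
Lemma ID m M a b : Iz m M a -> Iz m M b -> Iz m M (a + b).
Proof. move=> [c [d ->]] [c' [d' ->]]; exists (c + c'), (d + d'); ring. Qed.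
Lemma IN m M a : Iz m M a -> Iz m M (- a).
Proof. move=> [c [d ->]]; exists (- c), (- d); ring. Qed.
Lemma IMr m M a b : Iz m M a -> Iz m M (a * b).
Proof. move=> [c [d ->]]; exists (c * b), (d * b); ring. Qed.
Lemma IMl m M a b : Iz m M b -> Iz m M (a * b).
Proof. by rewrite mulrC; apply: IMr. Qed.
Lemma I_D m M a : Dz m a -> Iz m M a.
Proof. by move=> [c ->]; exists c, 0; rewrite mulr0 addr0. Qed.
Lemma I_X m M d : Iz m M ('X^M * d).
Proof. by exists 0, d; rewrite mulr0 add0r. Qed.
Lemma I_0m m M a : Iz 0 M a -> Iz m M a.
Proof. by move=> [c [d ->]]; exists 0, d; rewrite !mulr0 !mul0r. Qed.
Lemma I_le m M M' a : (M <= M')%N -> Iz m M' a -> Iz m M a.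
Proof.
move=> le [c [d ->]]; exists c, ('X^(M' - M) * d).
by rewrite mulrA -exprD subnKC.
Qed.
Lemma I_coef m M a i : Iz m M a -> (i < M)%N -> (m%:Z %| a`_i)%Z.
Proof.
move=> [c [d ->]] lt; rewrite coefD coefXnM lt addr0 mulr_natl coefMn -mulr_natr.
by apply: dvdz_mull; rewrite natz.
Qed.


Lemma C_refl m M a : Cz m M a a.
Proof. by rewrite /Cz subrr; apply: I0. Qed.
Lemma C_sym m M a b : Cz m M a b -> Cz m M b a.
Proof. by rewrite /Cz => h; have := IN h; rewrite opprB. Qed.
Lemma C_trans m M a b c : Cz m M a b -> Cz m M b c -> Cz m M a c.
Proof. by rewrite /Cz => h1 h2; have := ID h1 h2; rewrite addrA subrK. Qed.
Lemma C_M m M a b c d : Cz m M a b -> Cz m M c d -> Cz m M (a * c) (b * d).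
Proof.
rewrite /Cz => h1 h2.
have -> : a * c - b * d = (a - b) * c + b * (c - d) by ring.
by apply: ID; [apply: IMr | apply: IMl].
Qed.
Lemma C_X m M a b n : Cz m M a b -> Cz m M (a ^+ n) (b ^+ n).
Proof.
move=> h; elim: n => [|n IH]; first exact: C_refl.
by rewrite !exprS; apply: C_M.
Qed.
Lemma C_prod m M n (F G : nat -> {poly int}) :
  (forall i, (i < n)%N -> Cz m M (F i) (G i)) ->
  Cz m M (\prod_(i < n) F i) (\prod_(i < n) G i).
Proof.
elim: n => [|n IH] h; first by rewrite !big_ord0; apply: C_refl.
rewrite !big_ord_recr /=; apply: C_M; last exact: h.
by apply: IH => i lt; apply: h; apply: ltnW.
Qed.
Lemma C_0m m M a b : Cz 0 M a b -> Cz m M a b.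
Proof. exact: I_0m. Qed.
Lemma C_le m M M' a b : (M <= M')%N -> Cz m M' a b -> Cz m M a b.
Proof. exact: I_le. Qed.
Lemma C_D m M a b : Dz m (a - b) -> Cz m M a b.
Proof. exact: I_D. Qed.

Lemma D0 m : Dz m 0.
Proof. by exists 0; rewrite mulr0. Qed.
Lemma DD m a b : Dz m a -> Dz m b -> Dz m (a + b).
Proof. move=> [c ->] [d ->]; exists (c + d); ring. Qed.
Lemma DMr m a b : Dz m a -> Dz m (a * b).
Proof. move=> [c ->]; exists (c * b); ring. Qed.
Lemma DMl m a b : Dz m b -> Dz m (a * b).
Proof. by rewrite mulrC; apply: DMr. Qed.
Lemma D_expB m a b n : Dz m (a - b) -> Dz m (a ^+ n - b ^+ n).
Proof. by move=> h; rewrite subrXX; apply: DMr. Qed.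

Lemma key_pow (b c : {poly int}) (p : nat) n : exists r : {poly int},
  (b + p%:R * c) ^+ n.+1 = b ^+ n.+1 + (n.+1)%:R * p%:R * c * b ^+ n + (p%:R * p%:R) * r.
Proof.
elim: n => [|n [r IH]]; first by exists 0; ring.
exists ((n.+1)%:R * c * c * b ^+ n + r * (b + p%:R * c)).
rewrite [in LHS]exprS IH [b ^+ n.+2]exprS [b ^+ n.+1]exprS.
rewrite -[(n.+2)%:R]natr1 -[(n.+1)%:R]natr1.
ring.
Qed.

Lemma D_pow p (a b : {poly int}) : (0 < p)%N -> Dz p (a - b) -> Dz (p * p) (a ^+ p - b ^+ p).
Proof.
move=> p0 [c hc].
have -> : a = b + p%:R * c by rewrite -hc; ring.
case: p p0 hc => // p _ hc.
have [r ->] := key_pow b c p.+1 p.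
by exists (c * b ^+ p + r); rewrite natrM; ring.
Qed.
Lemma D_frob p (a b : {poly int}) : prime p -> Dz p ((a + b) ^+ p - (a ^+ p + b ^+ p)).
Proof.
move=> pp; have p0 := prime_gt0 pp.
rewrite exprDn.
case: p pp p0 => // p pp _.
rewrite big_ord_recr big_ord_recl /= subnn bin0 binn subn0 !expr0 !mulr1 mul1r.
set S := \sum_(i < p) _.
have -> : a ^+ p.+1 + S + b ^+ p.+1 - (a ^+ p.+1 + b ^+ p.+1) = S by ring.
rewrite /S; elim/big_ind: _ => //; [exact: D0 | exact: DD |].
move=> i _.
have hb : (p.+1 %| 'C(p.+1, bump 0 i))%N.
  apply: prime_dvd_bin => //; rewrite /bump /= add1n ltnS ltn_ord //=.
rewrite -(divnK hb) mulrnA; exists (a ^+ (p.+1 - bump 0 i) * b ^+ bump 0 i *+ ('C(p.+1, bump 0 i) %/ p.+1)).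
by rewrite mulr_natl.
Qed.

Lemma D_trans m (a b c : {poly int}) : Dz m (a - b) -> Dz m (b - c) -> Dz m (a - c).
Proof. by move=> h1 h2; have := DD h1 h2; rewrite addrA subrK. Qed.

Lemma frob1 p (y : {poly int}) : prime p -> odd p -> Dz p ((1 - y) ^+ p - (1 - y ^+ p)).
Proof.
move=> pp op; have := D_frob 1 (- y) pp.
by rewrite expr1n exprNn -signr_odd op expr1 mulN1r.
Qed.

Lemma frobX p i : prime p -> odd p -> Dz p ((1 - 'X) ^+ (p ^ i) - (1 - 'X^(p ^ i))).
Proof.
move=> pp op; elim: i => [|i IH]; first by rewrite expn0 expr1 subrr; apply: D0.
rewrite expnSr !exprM; apply: (@D_trans _ _ ((1 - 'X^(p ^ i)) ^+ p)).
  exact: D_expB.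
exact: frob1.
Qed.
Definition Sy (y : {poly int}) N k := \sum_(j < N.+1) ('C(j + k - 1, j))%:R *: y ^+ j.

Lemma Sy_step (y : {poly int}) N k :
  (1 - y) * Sy y N k.+1 = Sy y N k - ('C(N + k, N))%:R *: y ^+ N.+1.
Proof.
rewrite /Sy; elim: N => [|N IH].
  by rewrite !big_ord1 !bin0 !scale1r expr0 expr1 mulr1.
rewrite big_ord_recr /= [in RHS]big_ord_recr /= mulrDr IH.
have e1 : (N.+1 + k.+1 - 1 = (N + k).+1)%N by lia.
have e2 : (N.+1 + k - 1 = N + k)%N by lia.
have e3 : (N.+1 + k = (N + k).+1)%N by lia.
rewrite e1 e2 e3 binS !scaler_nat mulrnDr !exprS.
set s := \sum_(j < N.+1) _. ring.
Qed.

Lemma trunc_y (y : {poly int}) N k : exists r : {poly int},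
  (1 - y) ^+ k * Sy y N k = 1 + y ^+ N.+1 * r.
Proof.
elim: k => [|k [r IH]].
  exists 0; rewrite expr0 mul1r mulr0 addr0 /Sy big_ord_recl /= bin0 scale1r expr0.
  rewrite big1 ?addr0 // => i _.
  by rewrite bin_small ?scale0r // addn0 /bump /= add1n subn1.
exists (r - ('C(N + k, N))%:R *: (1 - y) ^+ k).
rewrite exprSr -mulrA Sy_step mulrBr IH !scaler_nat.
ring.
Qed.
Lemma sumE p j e n : (0 < p)%N -> (p * j = (p - 1) * e)%N ->
  (\sum_(i < n.+1) p ^ i.+1 * j + e = e * p ^ n.+1)%N.
Proof.
move=> p0 h; elim: n => [|n IH].
  rewrite big_ord1 expn1; nia.
rewrite big_ord_recr /= -addnA [(_ * j + e)%N]addnC addnA IH.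
rewrite (expnSr p n.+1).
set x := (p ^ n.+1)%N. nia.
Qed.

Lemma sumF p k n : (0 < p)%N ->
  ((\sum_(i < n.+1) p ^ i * k) * (p - 1) + k = k * p ^ n.+1)%N.
Proof.
move=> p0; elim: n => [|n IH].
  rewrite big_ord1 expn0 expn1; nia.
rewrite big_ord_recr /= mulnDl -addnA [(_ * (p - 1) + k)%N]addnC addnA IH.
rewrite (expnSr p n.+1).
set x := (p ^ n.+1)%N; nia.
Qed.

Lemma DN m (a : {poly int}) : Dz m a -> Dz m (- a).
Proof. by move=> [c ->]; exists (- c); rewrite mulrN. Qed.

Lemma frobX' p i : prime p -> odd p -> Dz p ((1 - 'X^(p ^ i)) - (1 - 'X) ^+ (p ^ i)).
Proof. by move=> pp op; rewrite -opprB; apply: DN; apply: frobX. Qed.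

Lemma Xd_I m M d (r : {poly int}) : (M <= d)%N -> Iz m M ('X^d * r).
Proof. by move=> le; apply: (I_le le); apply: I_X. Qed.

Lemma C1X m M d : (M <= d)%N -> Cz m M (1 - 'X^d) 1.
Proof.
move=> le; rewrite /Cz (_ : 1 - 'X^d - 1 = 'X^d * (-1)); first exact: Xd_I.
by rewrite mulrN1 addrC addKr.
Qed.

Definition Bn p k n := \prod_(i < n.+1) inv_factor_trunc n (p ^ i) k.
Definition Un p k n : {poly int} := \prod_(i < n.+1) (1 - 'X^(p ^ i)) ^+ k.

Lemma T_eq N d k : inv_factor_trunc N d k = Sy ('X^d) N k.
Proof. by rewrite /inv_factor_trunc /Sy; apply: eq_bigr => j _; rewrite -exprM mulnC. Qed.

Lemma LB p k n : (0 < p)%N -> Cz 0 n.+1 (Bn p k n * Un p k n) 1.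
Proof.
move=> p0; rewrite /Bn /Un -big_split /=.
apply: (@C_trans _ _ _ (\prod_(i < n.+1) (1 : {poly int}))); last by rewrite big1_eq; apply: C_refl.
apply: (C_prod (F := fun i : nat => inv_factor_trunc n (p ^ i) k * (1 - 'X^(p ^ i)) ^+ k) (G := fun _ => 1)) => i _.
rewrite T_eq mulrC.
have [r ->] := trunc_y ('X^(p ^ i)) n k.
rewrite /Cz addrC addKr -exprM.
apply: Xd_I; rewrite -[X in (X <= _)%N]mul1n leq_mul2r expn_gt0 p0 orbT //.
Qed.

Lemma U_ext p k j d : (1 < p)%N -> Cz 0 j.+1 (Un p k (j + d)) (Un p k j).
Proof.
move=> p1; elim: d => [|d IH]; first by rewrite addn0; apply: C_refl.
rewrite addnS -[Un p k j]mulr1 {1}/Un big_ord_recr /=.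
apply: C_M; first exact: IH.
apply: (@C_trans _ _ _ (1 ^+ k)); last by rewrite expr1n; apply: C_refl.
apply: C_X; apply: C1X.
by apply: ltnW; apply: leq_ltn_trans (ltn_expl _ p1); rewrite ltnS leq_addr.
Qed.

Lemma cancel0 M (a u : {poly int}) : Iz 0 M (a * u) -> u`_0 = 1 ->
  forall i, (i < M)%N -> a`_i = 0.
Proof.
move=> [c [d hz]] u0.
have hc : forall i, (i < M)%N -> (a * u)`_i = 0.
  by move=> i lt; rewrite hz mul0r add0r coefXnM lt.
suff : forall n i, (i <= n)%N -> (i < M)%N -> a`_i = 0.
  by move=> h i; apply: (h i).
elim=> [|n IH] i le lt.
  case: i le lt => // _ lt.
  by have := hc 0%N lt; rewrite coef0M u0 mulr1.
have := hc i lt; rewrite coefM big_ord_recr /= subnn u0 mulr1 big1 ?add0r //.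
move=> j _; rewrite (IH j) ?mul0r //; last by apply: ltn_trans lt.
by rewrite -ltnS; apply: leq_trans le.
Qed.

Lemma coef_Un0 p k n : (0 < p)%N -> (Un p k n)`_0 = 1.
Proof.
move=> p0; rewrite -horner_coef0 /Un horner_prod big1 // => i _.
by rewrite horner_exp hornerD hornerN hornerXn hornerC expr0n expn_eq0 (negbTE (lt0n_neq0 p0)) /=; rewrite subr0 expr1n.
Qed.

Lemma consist p k j n : (1 < p)%N -> (j <= n)%N -> (Bn p k n)`_j = A p k j.
Proof.
move=> p1 le; have p0 : (0 < p)%N by apply: ltnW.
rewrite -(subnKC le); set d := (n - j)%N.
have h1 : Cz 0 j.+1 (Bn p k (j + d) * Un p k j) 1.
  apply: (@C_trans _ _ _ (Bn p k (j + d) * Un p k (j + d))).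
    by apply: C_M; [apply: C_refl | apply: C_sym; apply: U_ext].
  by apply: (@C_le _ _ (j + d).+1); [rewrite ltnS leq_addr | apply: LB].
have h2 := LB k j p0.
have h3 : Iz 0 j.+1 ((Bn p k (j + d) - Bn p k j) * Un p k j).
  by have := C_trans h1 (C_sym h2); rewrite /Cz mulrBl.
have := cancel0 h3 (coef_Un0 k j p0) (ltnSn j).
by rewrite coefB => /eqP; rewrite subr_eq0 => /eqP.
Qed.

Lemma size1X (R : nzRingType) : size (1 - 'X : {poly R}) = 2%N.
Proof. by rewrite -opprB size_opp -polyC1 size_XsubC. Qed.

Lemma partA p k n e j t : prime p -> odd p -> k = ((p - 1) * e)%N -> k = (p * j)%N ->
  e = (p * t)%N -> (e < n)%N -> (((p * p)%N)%:Z %| A p k n)%Z.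
Proof.
move=> pp op hke hkj het len.
have p1 := prime_gt1 pp; have p0 := prime_gt0 pp.
set M := n.+1.
have h1 : Cz (p * p) M (Bn p k n * Un p k n) 1 by apply: C_0m; apply: LB.
have h2 : Cz (p * p) M (Un p k n) ((1 - 'X) ^+ (\sum_(i < n.+1) p ^ i.+1 * j)).
  rewrite -prodrXr /Un.
  apply: (C_prod (F := fun i : nat => (1 - 'X^(p ^ i)) ^+ k)
                 (G := fun i : nat => (1 - 'X) ^+ (p ^ i.+1 * j))) => i _.
  rewrite hkj !exprM expnSr exprM; apply: C_X; apply: C_D.
  by apply: D_pow => //; apply: frobX'.
have h3 := sumE n p0 (etrans (esym hkj) hke).
have h4 : Cz (p * p) M (Bn p k n * (1 - 'X) ^+ (\sum_(i < n.+1) p ^ i.+1 * j)) 1.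
  apply: C_trans h1; apply: C_M; [apply: C_refl | apply: C_sym; exact: h2].
have h5 : Cz (p * p) M (Bn p k n * (1 - 'X) ^+ (e * p ^ M)) ((1 - 'X) ^+ e).
  rewrite -h3 exprD mulrA -[X in Cz _ _ _ X]mul1r.
  by apply: C_M => //; apply: C_refl.
have h6 : Cz (p * p) M ((1 - 'X) ^+ (e * p ^ M)) 1.
  have -> : (e * p ^ M = p ^ M * p * t)%N by rewrite het; set x := (p ^ M)%N; nia.
  rewrite exprM.
  apply: (@C_trans _ _ _ (1 ^+ t)); last by rewrite expr1n; apply: C_refl.
  apply: C_X; rewrite exprM.
  apply: (@C_trans _ _ _ ((1 - 'X^(p ^ M)) ^+ p)).
    by apply: C_D; apply: D_pow => //; apply: frobX.
  apply: C_0m; apply: (@C_trans _ _ _ (1 ^+ p)); last by rewrite expr1n; apply: C_refl.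
  apply: C_X; apply: C1X.
  by apply: ltnW; apply: ltn_expl.
have h7 : Cz (p * p) M (Bn p k n) ((1 - 'X) ^+ e).
  apply: C_trans h5; rewrite -[X in Cz _ _ X _]mulr1.
  by apply: C_M; [apply: C_refl | apply: C_sym].
have := I_coef h7 (ltnSn n); rewrite coefB.
rewrite [X in _ - X](nth_default 0) ?subr0 //.
apply: leq_trans (size_poly_exp_leq _ _) _; rewrite size1X /= mul1n //.
Qed.

Lemma divz_helper (x : int) (m : nat) : (m%:Z %| x)%Z -> x = (x %/ m%:Z)%Z *+ m.
Proof. by move=> h; rewrite -mulr_natr natz divzK. Qed.

Lemma coef_I m M (z : {poly int}) :
  (forall i, (i < M)%N -> (m%:Z %| z`_i)%Z) -> Iz m M z.
Proof.
move=> h; exists (\poly_(i < M) (z`_i %/ m%:Z)%Z), (drop_poly M z).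
rewrite -{1}(poly_take_drop M z) [drop_poly M z * _]mulrC; congr (_ + _).
apply/polyP => i; rewrite coef_take_poly mulr_natl coefMn coef_poly.
case: ifP => lt; last by rewrite mul0rn.
by rewrite -(divz_helper (h i lt)).
Qed.

Lemma L1 p k N0 : prime p -> odd p ->
  (forall n, (N0 <= n)%N -> (p%:Z %| A p k n)%Z) -> ((p - 1) %| k)%N.
Proof.
move=> pp op hA; have p1 := prime_gt1 pp; have p0 := prime_gt0 pp.
set n := (N0 + k + N0 * p)%N; set M := n.+1.
set P := \poly_(i < N0) A p k i.
have ha : Cz p M (Bn p k n) P.
  apply: coef_I => i lt; rewrite coefB coef_poly consist //.
  case: ifP => hi; first by rewrite subrr dvdz0.
  rewrite subr0; apply: hA; by rewrite leqNgt hi.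
have hb : Cz p M (P * Un p k n) 1.
  apply: C_trans (C_0m p (LB k n p0)); apply: C_M; [apply: C_sym | apply: C_refl] => //.
have hc : Cz p M (Un p k n) ((1 - 'X) ^+ (\sum_(i < n.+1) p ^ i * k)).
  rewrite -prodrXr /Un.
  apply: (C_prod (F := fun i : nat => (1 - 'X^(p ^ i)) ^+ k)
                 (G := fun i : nat => (1 - 'X) ^+ (p ^ i * k))) => i _.
  rewrite exprM; apply: C_X; apply: C_D; exact: frobX'.
have hd : Cz p M (P ^+ (p - 1) * (1 - 'X) ^+ ((\sum_(i < n.+1) p ^ i * k) * (p - 1))) 1.
  apply: (@C_trans _ _ _ (1 ^+ (p - 1))); last by rewrite expr1n; apply: C_refl.
  rewrite exprM -exprMn; apply: C_X; apply: C_trans hb.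
  by apply: C_M; [apply: C_refl | apply: C_sym].
have he : Cz p M (P ^+ (p - 1) * (1 - 'X) ^+ (k * p ^ M)) ((1 - 'X) ^+ k).
  rewrite -(sumF k n p0) exprD mulrA -[X in Cz _ _ _ X]mul1r.
  by apply: C_M => //; apply: C_refl.
have hf : Cz p M ((1 - 'X) ^+ (k * p ^ M)) 1.
  rewrite mulnC exprM.
  apply: (@C_trans _ _ _ (1 ^+ k)); last by rewrite expr1n; apply: C_refl.
  apply: C_X; apply: (@C_trans _ _ _ (1 - 'X^(p ^ M))).
    by apply: C_D; apply: frobX.
  by apply: C1X; apply: ltnW; apply: ltn_expl.
have hg : Cz p M (P ^+ (p - 1)) ((1 - 'X) ^+ k).
  apply: C_trans he; rewrite -[X in Cz _ _ X _]mulr1.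
  by apply: C_M; [apply: C_refl | apply: C_sym].
case: hg => c [d hcd].
pose phi := map_poly (intr : int -> 'F_p).
have hp0 : (p%:R : {poly 'F_p}) = 0 by rewrite -polyC_natr pchar_Fp_0 // polyC0.
have := congr1 phi hcd.
rewrite /phi rmorphB rmorphD !rmorphM !rmorphXn rmorphB rmorph1 /= map_polyX.
have -> : map_poly (intr : int -> 'F_p) (p%:R : {poly int}) = p%:R by rewrite (rmorph_nat (map_poly intr)).
rewrite hp0 mul0r add0r.
set Q := phi P; set L := _ - _ => hL.
have sQ : (size Q <= N0)%N.
  apply/leq_sizeP => j hj; rewrite coef_map /= coef_poly ltnNge hj /=.
  by rewrite mulr0z.
have sL : (size L <= M)%N.
  apply: leq_trans (size_polyD _ _) _; rewrite size_opp geq_max; apply/andP; split.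
    apply: leq_trans (size_poly_exp_leq _ _) _; rewrite ltnS.
    apply: leq_trans (leq_mul (leq_pred _) (leq_subr 1 p)) _.
    apply: leq_trans (leq_mul sQ (leqnn p)) _; rewrite /n leq_addl //.
  apply: leq_trans (size_poly_exp_leq _ _) _; rewrite size1X mul1n ltnS /n.
  by rewrite -addnA addnCA leq_addr.
have hd0 : phi d = 0.
  apply/polyP => i; rewrite coef0.
  have := congr1 (fun q : {poly 'F_p} => q`_(i + M)) hL.
  rewrite /= coefXnM ltnNge leq_addl /= addnK => <-.
  by apply: (leq_sizeP _ _ sL); apply: leq_addl.
move: hL; rewrite /phi in hd0; rewrite hd0 mulr0 => /eqP; rewrite subr_eq0 => /eqP hQ.
have := congr1 (fun q : {poly 'F_p} => (size q).-1) hQ.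
rewrite /= !size_exp size1X mul1n => <-.
exact: dvdn_mull.
Qed.

Theorem corollary3p4 (p k : nat) :
  prime p -> (3 <= p)%N -> (0 < k)%N ->
  (exists N : nat, forall n : nat, (N <= n)%N ->
      A p k n != 0 /\ nu p (A p k n) = 1%N) ->
  (((p - 1) %| k)%N -> ~~ (p %| k)%N) /\
  (forall k' q : nat, ~~ ((p - 1) %| k)%N -> (1 <= q <= p - 2)%N ->
      k = ((p - 1) * k' + q)%N -> (p %| k'.+1)%N -> ~~ (p ^ 2 %| k'.+1)%N).
Proof.
move=> pp p3 k0 [N0 hN].
have op : odd p by case: (even_prime pp) => // p2; rewrite p2 in p3.
have hA : forall n, (N0 <= n)%N -> (p%:Z %| A p k n)%Z.
  move=> n /hN [nz hnu]; rewrite /nu in hnu.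
  have pos : (0 < `|A p k n|)%N by rewrite absz_gt0.
  by rewrite /dvdz unfold_in /= -(expn1 p) pfactor_dvdn // hnu.
split; last by move=> k' q hnd _ _ _; rewrite (L1 pp op hA) in hnd.
move=> hk; apply/negP => hpk.
have p1 := prime_gt1 pp.
set e := (k %/ (p - 1))%N.
have hke : k = ((p - 1) * e)%N by rewrite mulnC divnK.
set j := (k %/ p)%N.
have hkj : k = (p * j)%N by rewrite mulnC divnK.
have cop : coprime p (p - 1).
  rewrite prime_coprime //; apply/negP => /dvdn_leq; rewrite subn_gt0 p1 => /(_ isT).
  by rewrite leqNgt ltn_subrL (prime_gt0 pp).
have hpe : (p %| e)%N by move: hpk; rewrite hke Gauss_dvdr.
set t := (e %/ p)%N.
have het : e = (p * t)%N by rewrite /t mulnC (divnK hpe).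
set n := (N0 + e.+1)%N.
have h2 := partA pp op hke hkj het (leq_addl N0 e.+1).
have [nz hnu] := hN n (leq_addr _ _).
have pos : (0 < `|A p k n|)%N by rewrite absz_gt0.
move: h2; rewrite /dvdz unfold_in /= mulnn pfactor_dvdn //.
by rewrite /nu in hnu; rewrite hnu.
Qed.
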